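(* Let $c$ be the complex Banach space of convergent sequences with the supremum norm, and let $L\in c^*$ be $L((c_n)_n)=\lim_{n\to\infty}c_n$ (so $\|L\|=1$). Let $\epsilon>0$. If $S:c\to c$ is a finite rank bounded linear operator with $\|(S^*-I_{c^*})L\|<\epsilon$, then $\|S-I_c\|\ge 2-\epsilon$. *)

(* Defs.v *)
From Stdlib Require Import Reals Lra.
Open Scope R_scope.

Definition C : Type := (R * R)%type.
Definition C0 : C := (0, 0).
Definition Cadd (z w : C) : C := (fst z + fst w, snd z + snd w).
Definition Csub (z w : C) : C := (fst z - fst w, snd z - snd w).
Definition Cmul (z w : C) : C :=
  (fst z * fst w - snd z * snd w, fst z * snd w + snd z * fst w).
Definition Cmod (z : C) : R := sqrt (fst z * fst z + snd z * snd z).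

Fixpoint Csum (k : nat) (f : nat -> C) : C :=
  match k with
  | O => C0
  | S k' => Cadd (Csum k' f) (f k')
  end.

Definition seqC := nat -> C.

Definition is_lim (a : seqC) (l : C) : Prop :=
  forall e, 0 < e -> exists N : nat, forall n, (N <= n)%nat -> Cmod (Csub (a n) l) < e.

Definition convergent (a : seqC) : Prop := exists l, is_lim a l.

Definition bounded_by (a : seqC) (M : R) : Prop := forall n, Cmod (a n) <= M.

(** Operators on c are represented by functions on sequences whose behaviour
    on convergent sequences is what matters. *)
Definition maps_c (S : seqC -> seqC) : Prop :=
  forall a, convergent a -> convergent (S a).

Definition linear_on_c (S : seqC -> seqC) : Prop :=
  (forall a b, convergent a -> convergent b ->
     forall n, S (fun m => Cadd (a m) (b m)) n = Cadd (S a n) (S b n)) /\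
  (forall (alpha : C) a, convergent a ->
     forall n, S (fun m => Cmul alpha (a m)) n = Cmul alpha (S a n)).

(** ||T x|| <= r ||x|| for all x in c  (i.e. the operator norm of T on c is <= r) *)
Definition opnorm_le (T : seqC -> seqC) (r : R) : Prop :=
  forall a, convergent a -> forall M, bounded_by a M -> bounded_by (T a) (r * M).

Definition bounded_on_c (S : seqC -> seqC) : Prop := exists K, opnorm_le S K.

Definition finite_rank_on_c (S : seqC -> seqC) : Prop :=
  exists (k : nat) (v : nat -> seqC),
    (forall i, convergent (v i)) /\
    forall a, convergent a -> exists coef : nat -> C,
      forall n, S a n = Csum k (fun i => Cmul (coef i) (v i n)).

Definition minus_id (S : seqC -> seqC) : seqC -> seqC :=
  fun a n => Csub (S a n) (a n).

(** ||(S^* - I)L|| <= r, where L = lim : the functional a |-> lim (S a) - lim a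
    has norm at most r on c. *)
Definition dual_defect_le (S : seqC -> seqC) (r : R) : Prop :=
  forall a l l', convergent a -> is_lim a l -> is_lim (S a) l' ->
    forall M, bounded_by a M -> Cmod (Csub l' l) <= r * M.

(* Main.v *)
Require Import Defs.
From Stdlib Require Import Reals.
Open Scope R_scope.
From Stdlib Require Import Lra Lia ZArith ClassicalEpsilon Classical.
Require Coquelicot.Complex.
Import Defs.

Lemma Cext (z w : C) : fst z = fst w -> snd z = snd w -> z = w.
Proof. destruct z, w; simpl; intros; subst; reflexivity. Qed.
Ltac ceq := apply Cext; simpl; ring.

Lemma Cmod_eq z : Cmod z = Complex.Cmod z.
Proof. unfold Cmod, Complex.Cmod. f_equal. simpl. ring. Qed.
Lemma Cmod_ge0 z : 0 <= Cmod z.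
Proof. rewrite Cmod_eq; apply Complex.Cmod_ge_0. Qed.
Lemma Cmod_tri z w : Cmod (Cadd z w) <= Cmod z + Cmod w.
Proof. rewrite !Cmod_eq. exact (Complex.Cmod_triangle z w). Qed.
Lemma Cmod_mul z w : Cmod (Cmul z w) = Cmod z * Cmod w.
Proof. rewrite !Cmod_eq. exact (Complex.Cmod_mult z w). Qed.
Lemma Cmod_zero z : Cmod z = 0 -> z = C0.
Proof. rewrite Cmod_eq; intro H; apply Complex.Cmod_eq_0 in H; rewrite H; reflexivity. Qed.
Lemma Cmod_real x : Cmod (x, 0) = Rabs x.
Proof. rewrite Cmod_eq. exact (Complex.Cmod_R x). Qed.
Lemma Cmod_C0 : Cmod C0 = 0.
Proof. unfold C0. rewrite Cmod_real. apply Rabs_R0. Qed.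
Lemma Cmod_fst z : Rabs (fst z) <= Cmod z.
Proof. rewrite Cmod_eq; apply Complex.re_le_Cmod. Qed.
Lemma Cmod_snd z : Rabs (snd z) <= Cmod z.
Proof. rewrite Cmod_eq. eapply Rle_trans; [apply Rmax_r|apply Complex.Rmax_Cmod]. Qed.
Lemma Cmod_le_abs z : Cmod z <= Rabs (fst z) + Rabs (snd z).
Proof.
  unfold Cmod. rewrite <- (sqrt_square (Rabs (fst z) + Rabs (snd z)))
    by (pose proof (Rabs_pos (fst z)); pose proof (Rabs_pos (snd z)); lra).
  apply sqrt_le_1_alt.
  assert (E1: Rabs (fst z) * Rabs (fst z) = fst z * fst z)
    by (rewrite <- Rabs_mult; apply Rabs_pos_eq; nra).
  assert (E2: Rabs (snd z) * Rabs (snd z) = snd z * snd z)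
    by (rewrite <- Rabs_mult; apply Rabs_pos_eq; nra).
  pose proof (Rabs_pos (fst z)); pose proof (Rabs_pos (snd z)). nra.
Qed.
Lemma Cmod_sub_sym z w : Cmod (Csub z w) = Cmod (Csub w z).
Proof. unfold Cmod, Csub; simpl. f_equal. ring. Qed.
Lemma Cmod_sub_tri a b c : Cmod (Csub a c) <= Cmod (Csub a b) + Cmod (Csub b c).
Proof.
  replace (Csub a c) with (Cadd (Csub a b) (Csub b c)) by (unfold Csub, Cadd; ceq).
  apply Cmod_tri.
Qed.
Lemma Cmod_sub_le x y : Cmod (Csub x y) <= Cmod x + Cmod y.
Proof.
  replace (Csub x y) with (Cadd x (Cmul (-1,0) y)) by (unfold Csub, Cadd, Cmul; ceq).
  eapply Rle_trans; [apply Cmod_tri|]. rewrite Cmod_mul, Cmod_real.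
  replace (Rabs (-1)) with 1 by (rewrite Rabs_left; lra). lra.
Qed.
Lemma Csub_zero x y : Csub x y = C0 -> x = y.
Proof. unfold Csub, C0. intro H. injection H as H1 H2. apply Cext; lra. Qed.

Lemma Csum_ext k f g : (forall i, (i<k)%nat -> f i = g i) -> Csum k f = Csum k g.
Proof. induction k; simpl; intros H; [reflexivity|]. rewrite IHk by (intros; apply H; lia).
  rewrite H by lia. reflexivity. Qed.
Lemma Csum_add k f g : Csum k (fun i => Cadd (f i) (g i)) = Cadd (Csum k f) (Csum k g).
Proof. induction k; simpl. unfold Cadd, C0; ceq. rewrite IHk. unfold Cadd; ceq. Qed.
Lemma Csum_sub k f g : Csum k (fun i => Csub (f i) (g i)) = Csub (Csum k f) (Csum k g).
Proof. induction k; simpl. unfold Csub, C0; ceq. rewrite IHk. unfold Csub, Cadd; ceq. Qed.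
Lemma Csum_scal k c f : Csum k (fun i => Cmul c (f i)) = Cmul c (Csum k f).
Proof. induction k; simpl. unfold Cmul, C0; ceq. rewrite IHk. unfold Cmul, Cadd; ceq. Qed.

Fixpoint Rsum (k : nat) (f : nat -> R) : R :=
  match k with O => 0 | S k' => Rsum k' f + f k' end.
Lemma Cmod_Csum k f : Cmod (Csum k f) <= Rsum k (fun i => Cmod (f i)).
Proof. induction k; simpl. rewrite Cmod_C0; lra.
  eapply Rle_trans; [apply Cmod_tri|]. lra. Qed.
Lemma Rsum_le k f g : (forall i, (i<k)%nat -> f i <= g i) -> Rsum k f <= Rsum k g.
Proof. induction k; simpl; intros H; [lra|]. pose proof (H k ltac:(lia)).
  assert (Rsum k f <= Rsum k g) by (apply IHk; intros; apply H; lia). lra. Qed.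
Lemma Rsum_const k c : Rsum k (fun _ => c) = INR k * c.
Proof. induction k. simpl; ring. change (Rsum (S k) (fun _ => c)) with (Rsum k (fun _ => c) + c). rewrite IHk, S_INR. ring. Qed.
Lemma Rsum_scal k c f : Rsum k (fun i => c * f i) = c * Rsum k f.
Proof. induction k; simpl. ring. rewrite IHk. ring. Qed.
Lemma Rsum_ge0 k f : (forall i, 0 <= f i) -> 0 <= Rsum k f.
Proof. intros H; induction k; simpl. lra. pose proof (H k); lra. Qed.
Lemma Rsum_term k f i : (forall i, 0 <= f i) -> (i < k)%nat -> f i <= Rsum k f.
Proof. intros H; induction k; simpl; intros Hi; [lia|].
  destruct (Nat.eq_dec i k). subst. pose proof (Rsum_ge0 k f H). lra.
  pose proof (H k). assert (f i <= Rsum k f) by (apply IHk; lia). lra. Qed.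

Definition lc (m : nat) (a : nat -> C) (u : nat -> seqC) : seqC :=
  fun n => Csum m (fun i => Cmul (a i) (u i n)).

Lemma bounded_ge0 f M : bounded_by f M -> 0 <= M.
Proof. intros H. pose proof (H O). pose proof (Cmod_ge0 (f O)). lra. Qed.

Lemma conv_bounded v : convergent v -> exists V, 0 <= V /\ forall n, Cmod (v n) <= V.
Proof.
  intros [l Hl]. destruct (Hl 1 ltac:(lra)) as [N HN].
  exists (Cmod l + 1 + Rsum N (fun n => Cmod (v n))). split.
  pose proof (Cmod_ge0 l). pose proof (Rsum_ge0 N (fun n => Cmod (v n)) (fun i => Cmod_ge0 _)). lra.
  intro n. pose proof (Cmod_ge0 l). pose proof (Rsum_ge0 N (fun n => Cmod (v n)) (fun i => Cmod_ge0 _)).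
  destruct (Compare_dec.le_lt_dec N n) as [h|h].
  - specialize (HN n h). replace (v n) with (Cadd (Csub (v n) l) l) by (unfold Cadd, Csub; ceq).
    pose proof (Cmod_tri (Csub (v n) l) l). lra.
  - pose proof (Rsum_term N (fun n => Cmod (v n)) n (fun i => Cmod_ge0 _) h). simpl in H1. lra.
Qed.

Lemma inv_pos j : 0 < / (INR j + 1).
Proof. apply Rinv_0_lt_compat. pose proof (pos_INR j). lra. Qed.

Lemma small D e : 0 < e -> exists N, forall n, (N <= n)%nat -> D * / (INR n + 1) < e.
Proof.
  intros He. destruct (Rle_lt_dec D 0) as [hD|hD].
  - exists O. intros n _. pose proof (inv_pos n). nra.
  - destruct (archimed (D / e)) as [H1 _].
    assert (Hup: (0 <= up (D/e))%Z).
    { apply le_IZR. assert (0 < D / e) by (apply Rdiv_lt_0_compat; lra). lra. }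
    exists (Z.to_nat (up (D/e))). intros n Hn.
    apply le_INR in Hn. rewrite INR_IZR_INZ, Z2Nat.id in Hn by exact Hup.
    pose proof (pos_INR n).
    assert (D / e < INR n + 1) by lra.
    apply (Rmult_lt_reg_r (INR n + 1)); [lra|].
    rewrite Rmult_assoc, Rinv_l by lra.
    unfold Rdiv in *. apply (Rmult_lt_compat_l e) in H0; [|lra].
    replace (e * (D * / e)) with D in H0 by (field; lra). lra.
Qed.

Lemma zero_lemma x K : (forall j, x <= K * / (INR j + 1)) -> x <= 0.
Proof.
  intros H. destruct (Rle_lt_dec x 0); [lra|].
  destruct (small K x r) as [N HN]. specialize (HN N (le_n _)). specialize (H N). lra.
Qed.

Lemma Rcauchy (x : nat -> R) D :
  (forall j l, Rabs (x j - x l) <= D * (/ (INR j + 1) + / (INR l + 1))) ->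
  exists al, forall j, Rabs (x j - al) <= D * / (INR j + 1).
Proof.
  intros H.
  assert (Hc : Cauchy_crit x).
  { intros e He. destruct (small D (e/2)) as [N HN]; [lra|].
    exists N. intros n m Hn Hm. unfold R_dist.
    specialize (H n m). specialize (HN n Hn) as h1. specialize (HN m Hm) as h2. lra. }
  destruct (Rcomplete.R_complete x Hc) as [al Hal].
  exists al. intros j.
  destruct (Rle_lt_dec (Rabs (x j - al)) (D * / (INR j + 1))) as [h|h]; [exact h|].
  exfalso. set (g := Rabs (x j - al) - D * / (INR j + 1)).
  destruct (small D (g/2)) as [N1 HN1]; [unfold g; lra|].
  destruct (Hal (g/2)) as [N2 HN2]; [unfold g; lra|].
  set (l := Nat.max N1 N2).
  specialize (HN1 l ltac:(unfold l; lia)). specialize (HN2 l ltac:(unfold l; lia)).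
  unfold R_dist in HN2. specialize (H j l).
  assert (Rabs (x j - al) <= Rabs (x j - x l) + Rabs (x l - al)).
  { replace (x j - al) with ((x j - x l) + (x l - al)) by ring. apply Rabs_triang. }
  unfold g in *. lra.
Qed.

Lemma Ccauchy (z : nat -> C) D :
  (forall j l, Cmod (Csub (z j) (z l)) <= D * (/ (INR j + 1) + / (INR l + 1))) ->
  exists al, forall j, Cmod (Csub (z j) al) <= 2 * D * / (INR j + 1).
Proof.
  intros H.
  destruct (Rcauchy (fun j => fst (z j)) D) as [a1 H1].
  { intros j l. eapply Rle_trans; [|apply (H j l)]. apply (Cmod_fst (Csub (z j) (z l))). }
  destruct (Rcauchy (fun j => snd (z j)) D) as [a2 H2].
  { intros j l. eapply Rle_trans; [|apply (H j l)]. apply (Cmod_snd (Csub (z j) (z l))). }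
  exists (a1, a2). intros j. eapply Rle_trans; [apply Cmod_le_abs|]. simpl.
  specialize (H1 j). specialize (H2 j). simpl in *. lra.
Qed.

Lemma fin_cauchy (u : nat -> seqC) : (forall i, convergent (u i)) ->
  forall e, 0 < e -> forall m, exists N, forall i n p, (i < m)%nat -> (N <= n)%nat -> (N <= p)%nat ->
    Cmod (Csub (u i n) (u i p)) <= e.
Proof.
  intros Hu e He m. induction m.
  - exists O. intros; lia.
  - destruct IHm as [N1 HN1]. destruct (Hu m) as [l Hl].
    destruct (Hl (e/2)) as [N2 HN2]; [lra|].
    exists (Nat.max N1 N2). intros i n p Hi Hn Hp.
    destruct (Nat.eq_dec i m).
    + subst. eapply Rle_trans; [apply (Cmod_sub_tri _ l)|].
      rewrite (Cmod_sub_sym l). specialize (HN2 n ltac:(lia)) as h1.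
      specialize (HN2 p ltac:(lia)) as h2. lra.
    + apply HN1; lia.
Qed.

Definition good (m : nat) (u : nat -> seqC) (B : R) : Prop :=
  0 <= B /\ (forall i, convergent (u i)) /\
  (forall a M, bounded_by (lc m a u) M -> forall i, (i < m)%nat -> Cmod (a i) <= B * M).

Lemma tail m u B : good m u B -> forall d, 0 < d -> exists N, forall a M,
  bounded_by (lc m a u) M -> forall n p, (N <= n)%nat -> (N <= p)%nat ->
  Cmod (Csub (lc m a u n) (lc m a u p)) <= d * M.
Proof.
  intros [HB [Hu Hbd]] d Hd.
  set (X := INR m * B). assert (HX : 0 <= X) by (unfold X; pose proof (pos_INR m); nra).
  set (e := d / (X + 1)). assert (He : 0 < e) by (unfold e; apply Rdiv_lt_0_compat; lra).
  destruct (fin_cauchy u Hu e He m) as [N HN]. exists N.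
  intros a M Hab n p Hn Hp. pose proof (bounded_ge0 _ _ Hab) as HM.
  unfold lc. rewrite <- Csum_sub.
  eapply Rle_trans; [apply Cmod_Csum|].
  eapply Rle_trans.
  { apply (Rsum_le _ _ (fun _ => B * M * e)). intros i Hi.
    replace (Csub (Cmul (a i) (u i n)) (Cmul (a i) (u i p))) with (Cmul (a i) (Csub (u i n) (u i p)))
      by (unfold Cmul, Csub; ceq).
    rewrite Cmod_mul. apply Rmult_le_compat; try apply Cmod_ge0.
    apply (Hbd a M Hab i Hi). apply HN; auto. }
  rewrite Rsum_const.
  assert (E: e * (X + 1) = d) by (unfold e; field; lra).
  replace (INR m * (B * M * e)) with (X * (M * e)) by (unfold X; ring).
  assert (0 <= M * e) by nra. nra.
Qed.

Lemma lc_sub m a b u n : Csub (lc m a u n) (lc m b u n) = lc m (fun i => Csub (a i) (b i)) u n.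
Proof. unfold lc. rewrite <- Csum_sub. apply Csum_ext. intros. unfold Csub, Cmul; ceq. Qed.

Lemma closed_lemma m u B (w : seqC) : good m u B ->
  (forall e, 0 < e -> exists b, bounded_by (fun n => Csub (w n) (lc m b u n)) e) ->
  exists al, forall n, w n = lc m al u n.
Proof.
  intros Hg Happ. destruct Hg as [HB [Hu Hbd]].
  assert (Hb : forall j : nat, exists b, bounded_by (fun n => Csub (w n) (lc m b u n)) (/ (INR j + 1)))
    by (intro j; apply Happ; apply inv_pos).
  set (b := fun j => proj1_sig (constructive_indefinite_description _ (Hb j))).
  assert (Hbj : forall j, bounded_by (fun n => Csub (w n) (lc m (b j) u n)) (/ (INR j + 1)))
    by (intro j; exact (proj2_sig (constructive_indefinite_description _ (Hb j)))).
  assert (Hdiff : forall j l i, (i < m)%nat ->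
     Cmod (Csub (b j i) (b l i)) <= B * (/ (INR j + 1) + / (INR l + 1))).
  { intros j l i Hi. apply (Hbd (fun i => Csub (b j i) (b l i))); [|exact Hi].
    intro n. rewrite <- lc_sub.
    replace (Csub (lc m (b j) u n) (lc m (b l) u n)) with
      (Csub (Csub (w n) (lc m (b l) u n)) (Csub (w n) (lc m (b j) u n))) by (unfold Csub; ceq).
    eapply Rle_trans; [apply Cmod_sub_le|]. pose proof (Hbj j n); pose proof (Hbj l n). simpl in *. lra. }
  assert (Hal : forall i, exists al, (i < m)%nat -> forall j, Cmod (Csub (b j i) al) <= 2 * B * / (INR j + 1)).
  { intro i. destruct (Compare_dec.lt_dec i m) as [h|h].
    - destruct (Ccauchy (fun j => b j i) B) as [al Hal]. intros; apply Hdiff; auto.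
      exists al. intros _; exact Hal.
    - exists C0. intros; contradiction. }
  set (al := fun i => proj1_sig (constructive_indefinite_description _ (Hal i))).
  assert (Hali : forall i, (i < m)%nat -> forall j, Cmod (Csub (b j i) (al i)) <= 2 * B * / (INR j + 1))
    by (intro i; exact (proj2_sig (constructive_indefinite_description _ (Hal i)))).
  exists al. intro n. apply Csub_zero. apply Cmod_zero.
  apply Rle_antisym; [|apply Cmod_ge0].
  apply (zero_lemma _ (1 + 2 * B * Rsum m (fun i => Cmod (u i n)))). intro j.
  eapply Rle_trans; [apply (Cmod_sub_tri _ (lc m (b j) u n))|].
  rewrite lc_sub. unfold lc at 2.
  eapply Rle_trans. apply Rplus_le_compat. apply (Hbj j n).
  eapply Rle_trans; [apply Cmod_Csum|].
  apply (Rsum_le _ _ (fun i => 2 * B * / (INR j + 1) * Cmod (u i n))).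
  intros i Hi. rewrite Cmod_mul. apply Rmult_le_compat_r; [apply Cmod_ge0|]. apply Hali; auto.
  rewrite Rsum_scal. right. ring.
Qed.

Lemma key m a u (w : seqC) n :
  lc (S m) a (fun i => if Nat.eqb i m then w else u i) n = Cadd (lc m a u n) (Cmul (a m) (w n)).
Proof.
  unfold lc. simpl. rewrite Nat.eqb_refl. f_equal. apply Csum_ext.
  intros i Hi. assert (Nat.eqb i m = false) by (apply Nat.eqb_neq; lia). rewrite H. reflexivity.
Qed.

Lemma inv_ident (t c w A : C) : Cmul t c = (1, 0) ->
  Csub w (Cmul (Cmul (-1, 0) t) A) = Cmul t (Cadd A (Cmul c w)).
Proof.
  destruct t as [t1 t2], c as [c1 c2], w as [w1 w2], A as [a1 a2].
  unfold Cmul, Csub, Cadd; simpl. intro H. injection H as H1 H2.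
  apply Cext; simpl.
  - assert (E: w1 - ((-1 * t1 - 0 * t2) * a1 - (-1 * t2 + 0 * t1) * a2)
       - (t1 * (a1 + (c1 * w1 - c2 * w2)) - t2 * (a2 + (c1 * w2 + c2 * w1)))
       = w1 * (1 - (t1 * c1 - t2 * c2)) + w2 * (t1 * c2 + t2 * c1)) by ring.
    rewrite H1, H2 in E. lra.
  - assert (E: w2 - ((-1 * t1 - 0 * t2) * a2 + (-1 * t2 + 0 * t1) * a1)
       - (t1 * (a2 + (c1 * w2 + c2 * w1)) + t2 * (a1 + (c1 * w1 - c2 * w2)))
       = w2 * (1 - (t1 * c1 - t2 * c2)) - w1 * (t1 * c2 + t2 * c1)) by ring.
    rewrite H1, H2 in E. lra.
Qed.

Lemma Ind k : forall v : nat -> seqC, (forall i, convergent (v i)) ->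
  exists m u B, good m u B /\ forall coef, exists a, forall n, lc k coef v n = lc m a u n.
Proof.
  induction k; intros v Hv.
  - exists O, v, 0. split. split; [lra|split; [exact Hv|]]. intros; lia.
    intros coef. exists coef. intro n. reflexivity.
  - destruct (IHk v Hv) as (m & u & B & [HB [Hu Hbd]] & Hspan).
    assert (Hlc : forall coef n, lc (S k) coef v n = Cadd (lc k coef v n) (Cmul (coef k) (v k n)))
      by reflexivity.
    destruct (classic (exists eta, 0 < eta /\ forall a c M,
        bounded_by (fun n => Cadd (lc m a u n) (Cmul c (v k n))) M -> eta * Cmod c <= M))
      as [[eta [Heta HP]] | HnP].
    + destruct (conv_bounded (v k) (Hv k)) as [V [HV0 HV]].
      exists (S m), (fun i => if Nat.eqb i m then v k else u i), (B * (1 + V / eta) + / eta).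
      split; [split; [|split]|].
      * assert (0 <= V / eta) by (unfold Rdiv; apply Rmult_le_pos; [lra | left; apply Rinv_0_lt_compat; lra]).
        pose proof (Rinv_0_lt_compat eta Heta). nra.
      * intro i. destruct (Nat.eqb i m); auto.
      * intros a M Hab i Hi.
        assert (Hab' : bounded_by (fun n => Cadd (lc m a u n) (Cmul (a m) (v k n))) M)
          by (intro n; rewrite <- key; apply Hab).
        pose proof (bounded_ge0 _ _ Hab) as HM.
        specialize (HP a (a m) M Hab').
        assert (Ham : Cmod (a m) <= M * / eta).
        { replace (Cmod (a m)) with (eta * Cmod (a m) * / eta) by (field; lra).
          apply Rmult_le_compat_r; [left; apply Rinv_0_lt_compat; lra | lra]. }
        assert (0 <= V / eta) by (unfold Rdiv; apply Rmult_le_pos; [lra | left; apply Rinv_0_lt_compat; lra]).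
        assert (0 <= / eta) by (left; apply Rinv_0_lt_compat; lra).
        destruct (Nat.eq_dec i m) as [Heq|Hne].
        -- subst i. assert (0 <= B * (1 + V / eta) * M) by (apply Rmult_le_pos; [nra|lra]). nra.
        -- assert (Hb2 : bounded_by (lc m a u) (M + M * / eta * V)).
           { intro n. replace (lc m a u n) with
               (Csub (Cadd (lc m a u n) (Cmul (a m) (v k n))) (Cmul (a m) (v k n))) by (unfold Csub, Cadd; ceq).
             eapply Rle_trans; [apply Cmod_sub_le|]. rewrite Cmod_mul.
             pose proof (Hab' n). simpl in *.
             assert (Cmod (a m) * Cmod (v k n) <= M * / eta * V)
               by (apply Rmult_le_compat; auto; apply Cmod_ge0).
             lra. }
           pose proof (Hbd a _ Hb2 i ltac:(lia)).
           assert (E: B * (M + M * / eta * V) = B * (1 + V / eta) * M) by (unfold Rdiv; ring).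
           assert (0 <= / eta * M) by nra. nra.
      * intros coef. destruct (Hspan coef) as [a Ha].
        exists (fun i => if Nat.eqb i m then coef k else a i). intro n.
        rewrite key, Hlc, Ha, Nat.eqb_refl. f_equal. unfold lc. apply Csum_ext.
        intros i Hi. assert (Nat.eqb i m = false) by (apply Nat.eqb_neq; lia). rewrite H. reflexivity.
    + assert (Happ : forall e, 0 < e -> exists b, bounded_by (fun n => Csub (v k n) (lc m b u n)) e).
      { intros e He. pose proof (not_ex_all_not _ _ HnP e) as HnP0. clear HnP. rename HnP0 into HnP.
        apply not_and_or in HnP. destruct HnP as [HnP|HnP]; [contradiction|].
        apply not_all_ex_not in HnP. destruct HnP as [a HnP].
        apply not_all_ex_not in HnP. destruct HnP as [c HnP].
        apply not_all_ex_not in HnP. destruct HnP as [M HnP].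
        apply imply_to_and in HnP. destruct HnP as [HbM HnP]. apply Rnot_le_lt in HnP.
        pose proof (bounded_ge0 _ _ HbM) as HM.
        assert (Hc : 0 < Cmod c) by nra.
        assert (Hc0 : c <> C0) by (intro E; rewrite E, Cmod_C0 in Hc; lra).
        set (t := Complex.Cinv c).
        assert (Ht : Cmul t c = (1, 0)) by exact (Complex.Cinv_l c Hc0).
        assert (Hmt : Cmod t = / Cmod c) by (unfold t; rewrite Cmod_eq, Cmod_eq; exact (Complex.Cmod_inv c Hc0)).
        exists (fun i => Cmul (Cmul (-1, 0) t) (a i)). intro n.
        assert (E : lc m (fun i => Cmul (Cmul (-1, 0) t) (a i)) u n = Cmul (Cmul (-1, 0) t) (lc m a u n)).
        { unfold lc. rewrite <- Csum_scal. apply Csum_ext. intros. unfold Cmul; ceq. }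
        cbv beta. rewrite E, (inv_ident t c _ _ Ht). rewrite Cmod_mul, Hmt.
        pose proof (HbM n). simpl in H.
        apply (Rmult_le_reg_l (Cmod c)); [exact Hc|].
        rewrite <- Rmult_assoc, Rinv_r by lra.
        pose proof (Cmod_ge0 (Cadd (lc m a u n) (Cmul c (v k n)))). nra. }
      destruct (closed_lemma m u B (v k) (conj HB (conj Hu Hbd)) Happ) as [al Hal].
      exists m, u, B. split; [split; [|split]; auto|].
      intros coef. destruct (Hspan coef) as [a Ha].
      exists (fun i => Cadd (a i) (Cmul (coef k) (al i))). intro n.
      rewrite Hlc, Ha, Hal. unfold lc. rewrite <- Csum_scal, <- Csum_add. apply Csum_ext.
      intros. unfold Cmul, Cadd; ceq.
Qed.

Theorem mainTheorem7 (eps : R) (S : seqC -> seqC) :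
  0 < eps ->
  maps_c S -> linear_on_c S -> bounded_on_c S -> finite_rank_on_c S ->
  (exists r, r < eps /\ dual_defect_le S r) ->
  forall r, opnorm_le (minus_id S) r -> 2 - eps <= r.
Proof.
  intros Heps Hmaps _ [K HK] [k [v [Hv Hrange]]] [r0 [Hr0 Hdual]] r Hr.
  destruct (Ind k v Hv) as (m & u & B & Hgood & Hspan).
  set (one := fun _ : nat => ((1, 0) : C)).
  assert (Hone : convergent one).
  { exists (1, 0). intros e He. exists O. intros n _. unfold one.
    replace (Csub (1, 0) (1, 0)) with C0 by (unfold Csub, C0; ceq). rewrite Cmod_C0; lra. }
  assert (Hone1 : bounded_by one 1) by (intro n; unfold one; rewrite Cmod_real, Rabs_R1; lra).
  assert (HK0 : 0 <= K) by (pose proof (bounded_ge0 _ _ (HK one Hone 1 Hone1)); lra).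
  set (d := eps - r0).
  destruct (tail m u B Hgood (d / 2 / (K + 1))) as [N HN].
  { unfold d. apply Rdiv_lt_0_compat; lra. }
  set (x := fun j : nat => if Nat.eqb j N then ((-1, 0) : C) else (1, 0)).
  assert (Hxl : is_lim x (1, 0)).
  { intros e He. exists (Datatypes.S N). intros n Hn. unfold x.
    assert (Nat.eqb n N = false) by (apply Nat.eqb_neq; lia). rewrite H.
    replace (Csub (1, 0) (1, 0)) with C0 by (unfold Csub, C0; ceq). rewrite Cmod_C0; lra. }
  assert (Hxc : convergent x) by (exists (1, 0); exact Hxl).
  assert (Hx1 : bounded_by x 1).
  { intro n. unfold x. destruct (Nat.eqb n N); rewrite Cmod_real.
    rewrite Rabs_left; lra. rewrite Rabs_R1; lra. }
  destruct (Hmaps x Hxc) as [l' Hl'].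
  pose proof (Hdual x (1, 0) l' Hxc Hxl Hl' 1 Hx1) as H1.
  pose proof (Hr x Hxc 1 Hx1 N) as H2. unfold minus_id in H2.
  assert (HxN : x N = (-1, 0)) by (unfold x; rewrite Nat.eqb_refl; reflexivity).
  rewrite HxN in H2.
  pose proof (HK x Hxc 1 Hx1) as H3.
  destruct (Hrange x Hxc) as [coef Hcoef].
  destruct (Hspan coef) as [a Ha].
  assert (HSx : forall j, S x j = lc m a u j) by (intro j; rewrite Hcoef; apply Ha).
  assert (Hb : bounded_by (lc m a u) (K * 1)) by (intro j; rewrite <- HSx; apply H3).
  destruct (Hl' (d / 2)) as [P HP]; [unfold d; lra|].
  set (p := Nat.max N P).
  specialize (HN a (K * 1) Hb N p (le_n _) ltac:(unfold p; lia)).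
  specialize (HP p ltac:(unfold p; lia)).
  rewrite <- !HSx in HN.
  assert (Hsmall : d / 2 / (K + 1) * (K * 1) <= d / 2).
  { assert (0 <= d / 2 / (K + 1)) by (unfold d; left; apply Rdiv_lt_0_compat; lra).
    replace (d / 2) with (d / 2 / (K + 1) * (K + 1)) at 2 by (field; lra).
    apply Rmult_le_compat_l; lra. }
  assert (H2' : Cmod (Csub (1, 0) (-1, 0)) = 2).
  { replace (Csub (1, 0) (-1, 0)) with ((2, 0) : C) by (unfold Csub; ceq).
    rewrite Cmod_real, Rabs_right; lra. }
  pose proof (Cmod_sub_tri (1, 0) l' (-1, 0)) as T1.
  pose proof (Cmod_sub_tri l' (S x p) (-1, 0)) as T2.
  pose proof (Cmod_sub_tri (S x p) (S x N) (-1, 0)) as T3.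
  rewrite (Cmod_sub_sym (1, 0) l') in T1.
  rewrite (Cmod_sub_sym l' (S x p)) in T2.
  rewrite (Cmod_sub_sym (S x p) (S x N)) in T3.
  unfold d in *. lra.
Qed.
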